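(* Let $C$ be a cycle of length at least 4 in a 3-connected graph $F$, and let $K$ be (the vertex set of) a connected component of the reduced conflict graph $\mathrm{Con}^-(C)$. Then every vertex of $C$ belongs to $\mathrm{att}(K)=\bigcup_{X\in K}\mathrm{att}(X)$.
   Context: Let $F$ be a graph and $C$ a cycle of $F$. A $C$-bridge is either a chord of $C$ (an edge not in $C$ with both endpoints on $C$) or a connected component of $F-V(C)$ together with all edges joining it to $C$ and their endpoints on $C$. The attachments $\mathrm{att}(X)$ of a $C$-bridge $X$ are the vertices of $C$ incident to edges of $X$. Two pairs $\{x,y\}$, $\{u,v\}$ of four distinct vertices of $C$ alternate if each of the two arcs of $C$ with endpoints $x,y$ contains exactly one of $u,v$; two vertex sets $X,U\subseteq V(C)$ alternate if some pair from $X$ alternates with some pair from $U$. Two $C$-bridges have a four-vertex conflict if their attachment sets alternate. The reduced conflict graph $\mathrm{Con}^-(C)$ has the $C$-bridges as vertices, two adjacent iff they have a four-vertex conflict. *)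

(* Defs.v *)
(* Finite simple graphs as symmetric irreflexive relations. *)
From mathcomp Require Import all_boot.
Set Implicit Arguments. Unset Strict Implicit. Unset Printing Implicit Defensive.

Section Bridges.
Variables (T : finType) (e : rel T).

Definition del_rel (S : {set T}) : rel T :=
  [rel x y | [&& e x y, x \notin S & y \notin S]].

Definition k_connected (k : nat) : Prop :=
  k < #|T| /\
  forall S : {set T}, #|S| < k ->
    forall x y, x \notin S -> y \notin S -> connect (del_rel S) x y.

Variable c : seq T. (* the cycle C, listed in cyclic order *)

Definition cycle_edge (x y : T) : bool :=
  (next c x == y) || (next c y == x).

Definition is_chord (B : {set T}) : bool :=
  [exists x, exists y, [&& B == [set x; y], x \in c, y \in c, x != y,
                           e x y & ~~ cycle_edge x y]].

Definition off_rel : rel T := [rel x y | [&& e x y, x \notin c & y \notin c]].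

Definition is_comp (B : {set T}) : bool :=
  [exists u, (u \notin c) && (B == [set w | connect off_rel u w])].

(* A C-bridge is represented by its vertex set: {x,y} for a chord xy
   (a subset of V(C)), or the vertex set of the component of F - V(C)
   (disjoint from V(C), nonempty). *)
Definition is_bridge (B : {set T}) : bool := is_chord B || is_comp B.

Definition att (B : {set T}) : {set T} :=
  if B \subset [set x in c] then B
  else [set v in c | [exists u in B, e u v]].

Definition alternate (x y u v : T) : bool :=
  [&& uniq [:: x; y; u; v], all (mem c) [:: x; y; u; v],
      (u \in arc c x y) (+) (v \in arc c x y) &
      (u \in arc c y x) (+) (v \in arc c y x)].

Definition sets_alternate (X U : {set T}) : bool :=
  [exists x in X, exists y in X, exists u in U, exists v in U,
     alternate x y u v].

Definition conflict : rel {set T} := fun B1 B2 =>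
  [&& is_bridge B1, is_bridge B2, B1 != B2 & sets_alternate (att B1) (att B2)].

Definition is_conflict_component (K : {set {set T}}) : Prop :=
  exists B0, is_bridge B0 /\ K = [set B | connect conflict B0 B].

End Bridges.

(* Main.v *)
Require Import Defs.
From mathcomp Require Import all_boot zify.
Set Implicit Arguments. Unset Strict Implicit. Unset Printing Implicit Defensive.

Lemma addbE' a b : a (+) b = (a && ~~ b) || (~~ a && b). Proof. by case: a; case: b. Qed.

Lemma connect_ind_from (T : finType) (r : rel T) (x0 : T) (Q : T -> Prop) :
  Q x0 -> (forall y z, connect r x0 y -> Q y -> r y z -> Q z) ->
  forall y, connect r x0 y -> Q y.
Proof.
move=> Q0 H y /connectP [p pth ->] {y}.
elim/last_ind: p pth => [//|p z IH].
rewrite rcons_path => /andP [pp rz]; rewrite last_rcons.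
apply: (H (last x0 p)) => //; last by apply: IH.
by apply/connectP; exists p.
Qed.

Lemma index_rot (T : eqType) (s : seq T) k z : uniq s -> z \in s -> k < size s ->
  index z (rot k s) =
  if k <= index z s then index z s - k else index z s + (size s - k).
Proof.
move=> us zs ks.
have sz : size (take k s) = k by rewrite size_take ks.
have hs : index z s = index z (take k s ++ drop k s) by rewrite cat_take_drop.
move: (us); rewrite -{1}(cat_take_drop k s) cat_uniq => /and3P [_ hd _].
have ht := in_take k zs.
have zcat : z \in take k s ++ drop k s by rewrite cat_take_drop.
rewrite /rot index_cat hs index_cat sz size_drop.
case: ifP => zd.
  have zt : z \in take k s = false.
    apply/negP => zt; move/hasPn: hd => /(_ z zd); by rewrite zt.
  by rewrite zt leq_addr addKn.
have zt : z \in take k s by move: zcat; rewrite mem_cat zd orbF.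
have zt' := zt; rewrite ht hs index_cat zt' in zt.
by rewrite zt' leqNgt zt /= addnC.
Qed.

Lemma arc_pos (T : eqType) (s : seq T) x y u : uniq s -> x \in s -> y \in s -> u \in s ->
  x != y -> u != x -> u != y ->
  (u \in arc s x y) = [|| (index x s < index u s < index y s),
                          (index y s < index x s < index u s) |
                          (index u s < index y s < index x s)].
Proof.
move=> us xs ys zs xy ux uy.
have ixn : index x s < size s by rewrite index_mem.
have iyn : index y s < size s by rewrite index_mem.
have iun : index u s < size s by rewrite index_mem.
have d1 : index x s != index y s by apply: contra xy => /eqP/(index_inj x xs ys) ->.
have d2 : index u s != index x s by apply: contra ux => /eqP/(index_inj x zs xs) ->.
have d3 : index u s != index y s by apply: contra uy => /eqP/(index_inj x zs ys) ->.
rewrite /arc in_take ?mem_rot // !index_rot //.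
case: ifP => h1; case: ifP => h2; apply/idP/idP; lia.
Qed.

Definition btw (a b z : nat) := (a < z < b) || (b < z < a).
Definition linalt (a b x y : nat) := (btw a b x && ~~ btw a b y) || (~~ btw a b x && btw a b y).

Lemma lin_arc_alt (x y u w : nat) : x != y -> x != u -> x != w -> y != u -> y != w -> u != w ->
  let A := fun x y u => [|| (x < u < y), (y < x < u) | (u < y < x)] in
  (A x y u (+) A x y w) && (A y x u (+) A y x w) = linalt x y u w.
Proof. move=> d1 d2 d3 d4 d5 d6 A; rewrite /A !addbE' /linalt /btw.
case: (ltngtP x y) => h1; case: (ltngtP x u) => h2; case: (ltngtP x w) => h3;
 case: (ltngtP y u) => h4; case: (ltngtP y w) => h5; case: (ltngtP u w) => h6 //=; lia.
Qed.

Section Main.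
Variables (T : finType) (e : rel T).
Hypotheses (e_sym : symmetric e) (e_irr : irreflexive e) (F3 : k_connected e 3).
Variable c : seq T.
Hypotheses (c_uniq : uniq c) (c_len : 4 <= size c).

Lemma att_sub X z : z \in att e c X -> z \in c.
Proof.
rewrite /att; case: ifP => [/subsetP H /H|]; first by rewrite inE.
by rewrite inE => _ /andP [].
Qed.

Lemma off_conn u w : u \notin c -> connect (off_rel e c) u w -> w \notin c.
Proof.
move=> uc; apply: (connect_ind_from (Q := fun w => w \notin c)) => // y z _ _.
by case/and3P.
Qed.

Lemma comp_off B z : is_comp e c B -> z \in B -> z \notin c.
Proof.
case/existsP => u0 /andP [u0c /eqP ->]; rewrite inE; exact: off_conn.
Qed.

Lemma att_comp B : is_comp e c B -> att e c B = [set w in c | [exists u in B, e u w]].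
Proof.
move=> hB; rewrite /att; case: ifP => // /subsetP H.
case/existsP: (hB) => u0 /andP [u0c /eqP EB].
have : u0 \in B by rewrite EB inE connect0.
by move/H; rewrite inE (negbTE u0c).
Qed.

Lemma att_chord B : is_chord e c B -> att e c B = B.
Proof.
case/existsP => x /existsP [y /and5P [/eqP -> xc yc _ _]].
rewrite /att; case: ifP => //; move/negP; case; apply/subsetP => z.
by rewrite !inE => /orP [] /eqP ->.
Qed.

Lemma sep (S0 : {set T}) (Z : pred T) : #|S0| < 3 ->
  (forall x y, Z x -> e x y -> y \notin S0 -> Z y) ->
  forall x y, Z x -> x \notin S0 -> y \notin S0 -> ~~ Z y -> False.
Proof.
move=> hS hZ x y zx xS yS zy.
have := (proj2 F3) S0 hS x y xS yS.
move=> /(connect_ind_from (Q := fun w => Z w)) H.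
by move/negP: zy; apply; apply: H => // a b _ za /and3P [eab _ bS]; exact: hZ eab bS.
Qed.

Lemma comp_few B w : is_comp e c B -> #|att e c B| < 3 -> w \in c -> w \notin att e c B -> False.
Proof.
move=> hB hc wc wa.
have hatt := att_comp hB.
case/existsP: (hB) => u0 /andP [u0c /eqP EB].
apply: (@sep (att e c B) (mem B) hc _ u0 w).
- move=> x y xB exy ya; rewrite /= in xB *.
  have xc : x \notin c by exact: comp_off hB xB.
  case yc: (y \in c).
    move: ya; rewrite hatt inE yc /= => /existsPn /(_ x) /negP; case; exact/andP.
  move: xB; rewrite EB !inE => cx; apply: connect_trans cx (connect1 _).
  by rewrite /off_rel /= exy xc yc.
- by rewrite /= EB inE connect0.
- by apply/negP => /att_sub; rewrite (negbTE u0c).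
- by [].
- by apply/negP => /(comp_off hB); rewrite wc.
Qed.

Variable v : T.
Hypothesis vc : v \in c.
Definition cc := rot (index v c) c.
Definition p z := index z cc.

Lemma cc_uniq : uniq cc. Proof. by rewrite rot_uniq. Qed.
Lemma mem_cc z : (z \in cc) = (z \in c). Proof. exact: mem_rot. Qed.
Lemma size_cc : size cc = size c. Proof. exact: size_rot. Qed.

Lemma pv0 : p v = 0.
Proof.
rewrite /p /cc index_rot // ?index_mem // leqnn; lia.
Qed.

Lemma p_lt z : z \in c -> p z < size c.
Proof. by move=> zc; rewrite -size_cc /p index_mem mem_cc. Qed.

Lemma p_eq x y : x \in c -> y \in c -> (x == y) = (p x == p y).
Proof.
move=> xc yc; apply/eqP/eqP => [->//|]; apply: (index_inj x); by rewrite mem_cc.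
Qed.

Lemma p_surj k : k < size c -> exists2 z, z \in c & p z = k.
Proof.
move=> kn; exists (nth v cc k); first by rewrite -mem_cc mem_nth // size_cc.
by rewrite /p index_uniq // ?size_cc // cc_uniq.
Qed.

Lemma p_next z : z \in c -> next c z \in c /\
  ((p z + 1 < size c /\ p (next c z) = p z + 1) \/ (p z + 1 = size c /\ p (next c z) = 0)).
Proof.
move=> zc; split; first by rewrite mem_next.
have zl := p_lt zc.
rewrite -(next_rot (index v c) c_uniq) next_nth mem_cc zc.
case E: cc => [|h t]; first by move: zc; rewrite -mem_cc E.
rewrite -/cc -/(p z) E /=.
have st : size t = (size c).-1 by rewrite -size_cc E.
case: (ltnP (p z + 1) (size c)) => hz.
- left; split => //.
  have -> : nth h t (p z) = nth h cc (p z + 1) by rewrite E addn1.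
  rewrite /p index_uniq ?cc_uniq // size_cc //.
- right; split; first lia.
  rewrite nth_default; last lia.
  have -> : h = nth h cc 0 by rewrite E.
  rewrite /p index_uniq ?cc_uniq // size_cc; lia.
Qed.

Lemma arc_cc x y : x \in c -> arc c x y = arc cc x y.
Proof. by move=> xc; rewrite /cc arc_rot. Qed.

Lemma alt_lin x y u w : x \in c -> y \in c -> u \in c -> w \in c ->
  alternate c x y u w = [&& p x != p y, p x != p u, p x != p w, p y != p u,
                           p y != p w & p u != p w] && linalt (p x) (p y) (p u) (p w).
Proof.
move=> xc yc uc wc.
have uq : uniq [:: x; y; u; w] =
   [&& p x != p y, p x != p u, p x != p w, p y != p u, p y != p w & p u != p w].
  rewrite /= !inE (p_eq xc yc) (p_eq xc uc) (p_eq xc wc) (p_eq yc uc) (p_eq yc wc) (p_eq uc wc).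
  by rewrite !negb_or andbT !andbA.
rewrite /alternate uq /= xc yc uc wc /=.
case D : [&& p x != p y, p x != p u, p x != p w, p y != p u, p y != p w & p u != p w] => //=.
clear uq.
case/andP: D => d1 /andP [d2 /andP [d3 /andP [d4 /andP [d5 d6]]]].
have ne : forall a b, a \in c -> b \in c -> p a != p b -> a != b.
  by move=> a b ac bc; rewrite (p_eq ac bc).
have cx : x \in cc by rewrite mem_cc.
have cy : y \in cc by rewrite mem_cc.
have cu : u \in cc by rewrite mem_cc.
have cw : w \in cc by rewrite mem_cc.
have nxy : x != y by apply: ne.
have nux : u != x by apply: ne => //; rewrite eq_sym.
have nuy : u != y by apply: ne => //; rewrite eq_sym.
have nwx : w != x by apply: ne => //; rewrite eq_sym.
have nwy : w != y by apply: ne => //; rewrite eq_sym.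
have nyx : y != x by rewrite eq_sym.
rewrite (arc_cc y xc) (arc_cc x yc).
rewrite (arc_pos cc_uniq cx cy cu nxy nux nuy) (arc_pos cc_uniq cx cy cw nxy nwx nwy).
rewrite (arc_pos cc_uniq cy cx cu nyx nuy nux) (arc_pos cc_uniq cy cx cw nyx nwy nwx).
rewrite -!/(p _).
exact: (lin_arc_alt d1 d2 d3 d4 d5 d6).
Qed.

Variables (K : {set {set T}}) (B0 : {set T}).
Hypotheses (hB0 : is_bridge e c B0) (HK : K = [set B | connect (conflict e c) B0 B]).
Definition A := [set x | [exists X in K, x \in att e c X]].
Hypothesis vA : v \notin A.

Lemma B0K : B0 \in K. Proof. by rewrite HK inE connect0. Qed.

Lemma K_step X Y : X \in K -> conflict e c X Y -> Y \in K.
Proof. by rewrite HK !inE => cX cXY; apply: connect_trans cX (connect1 cXY). Qed.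

Lemma K_bridge X : X \in K -> is_bridge e c X.
Proof.
rewrite HK inE; apply: (connect_ind_from (Q := fun X => is_bridge e c X)) => // y z _ _.
by case/and3P.
Qed.

Lemma A_att X z : X \in K -> z \in att e c X -> z \in A.
Proof. by move=> XK zX; rewrite inE; apply/existsP; exists X; rewrite XK. Qed.

Lemma A_sub z : z \in A -> z \in c.
Proof. by rewrite inE => /existsP [X /andP [_ /att_sub]]. Qed.

Lemma A_nonempty : exists z, z \in A.
Proof.
case: (eqVneq (att e c B0) set0) => [E|/set0Pn [z zB]]; last by exists z; apply: A_att B0K zB.
exfalso; case/orP: hB0 => h.
- move: E; rewrite att_chord //; move: h => /existsP [x /existsP [y /and5P [/eqP -> _ _ _ _]]].
  by move/setP/(_ x); rewrite !inE eqxx.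
- by apply: (@comp_few B0 v h _ vc); rewrite E ?cards0 ?inE.
Qed.

Variables a b : T.
Hypotheses (aA : a \in A) (bA : b \in A)
  (amax : forall z, z \in A -> p z <= p a) (bmin : forall z, z \in A -> p b <= p z).

Lemma A_pos z : z \in A -> p b <= p z <= p a.
Proof. by move=> zA; rewrite amax ?bmin. Qed.

Lemma cross X s t : is_bridge e c X -> s \in att e c X -> (p s < p b) || (p a < p s) ->
   t \in att e c X -> p b < p t < p a -> False.
Proof.
move=> hX sX hs tX ht.
have sc := att_sub sX; have tc := att_sub tX.
have sA : s \notin A by apply/negP => /A_pos; lia.
have XnK : X \notin K by apply: contra sA => XK; apply: A_att XK sX.
case E: [exists Y in K, exists y1 in att e c Y, exists y2 in att e c Y,
              [&& btw (p s) (p t) (p y1), ~~ btw (p s) (p t) (p y2), y2 != s & y2 != t]].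
- case/existsP: E => Y /andP [YK /existsP [y1 /andP [y1Y /existsP [y2 /andP [y2Y /and4P [i1 i2 n2s n2t]]]]]].
  move/negP: (XnK); apply; apply: (K_step YK).
  rewrite /conflict (K_bridge YK) hX /=.
  apply/andP; split.
    by apply/eqP => EYX; move/negP: XnK; apply; rewrite -EYX.
  apply/existsP; exists y1; apply/andP; split => //; apply/existsP; exists y2; apply/andP; split => //.
  apply/existsP; exists s; apply/andP; split => //; apply/existsP; exists t; apply/andP; split => //.
  have y1c := att_sub y1Y; have y2c := att_sub y2Y.
  rewrite alt_lin //.
  move: n2s n2t; rewrite (p_eq y2c sc) (p_eq y2c tc) => n2s n2t.
  move: i1 i2 hs ht n2s n2t; rewrite /linalt /btw; clear; lia.
- have H : forall Y y, Y \in K -> y \in att e c Y -> y != t ->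
      [exists y1 in att e c Y, btw (p s) (p t) (p y1)] -> btw (p s) (p t) (p y).
    move=> Y y YK yY yt /existsP [y1 /andP [y1Y i1]]; apply/negPn/negP => ny.
    move/negP: (negbT E); apply; apply/existsP; exists Y; apply/andP; split => //.
    apply/existsP; exists y1; apply/andP; split => //.
    apply/existsP; exists y; apply/andP; split => //; rewrite i1 ny yt andbT /=.
    by apply: contraNneq sA => <-; apply: A_att yY.
  pose ins Y := [exists y in att e c Y, btw (p s) (p t) (p y)].
  have Hn : forall Y y, y \in att e c Y -> ~~ ins Y -> ~~ btw (p s) (p t) (p y).
    move=> Y y yY; apply: contra => iy; apply/existsP; exists y; by rewrite yY.
  have Hp : forall Y y, Y \in K -> y \in att e c Y -> ins Y ->
      btw (p s) (p t) (p y) || (p y == p t).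
    move=> Y y YK yY iY; case: (eqVneq y t) => [->|yt]; first by rewrite eqxx orbT.
    by rewrite (H Y y) .
  have Hs : forall Y y, Y \in K -> y \in att e c Y -> p y != p s.
    move=> Y y YK yY; rewrite -(p_eq (att_sub yY) sc).
    by apply: contraNneq sA => <-; apply: A_att yY.
  have inv : forall Y, connect (conflict e c) B0 Y -> ins Y = ins B0.
    apply: (connect_ind_from (Q := fun Y => ins Y = ins B0)) => // Y Z cY IY cYZ.
    have YK : Y \in K by rewrite HK inE.
    have ZK := K_step YK cYZ.
    rewrite -IY.
    case/and4P: cYZ => _ _ _ /existsP [x /andP [xY /existsP [y /andP [yY
       /existsP [u /andP [uZ /existsP [w /andP [wZ alt]]]]]]]].
    rewrite alt_lin ?(att_sub xY) ?(att_sub yY) ?(att_sub uZ) ?(att_sub wZ) // in alt.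
    have := Hs _ _ YK xY; have := Hs _ _ YK yY; have := Hs _ _ ZK uZ; have := Hs _ _ ZK wZ.
    case iY: (ins Y); case iZ: (ins Z) => //.
    + have := Hp _ _ YK xY iY; have := Hp _ _ YK yY iY.
      have := Hn _ _ uZ (negbT iZ); have := Hn _ _ wZ (negbT iZ).
      move: alt; rewrite /linalt /btw; clear; lia.
    + have := Hp _ _ ZK uZ iZ; have := Hp _ _ ZK wZ iZ.
      have := Hn _ _ xY (negbT iY); have := Hn _ _ yY (negbT iY).
      move: alt; rewrite /linalt /btw; clear; lia.
  have side : forall z, z \in A -> p z != p t -> btw (p s) (p t) (p z) = ins B0.
    move=> z; rewrite inE => /existsP [Y /andP [YK zY]] zt.
    have := YK; rewrite HK inE => /inv <-.
    case iz: (btw (p s) (p t) (p z)).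
      by apply/esym/existsP; exists z; rewrite zY.
    apply/esym/negbTE/negP => iY; move: (Hp _ _ YK zY iY); rewrite iz /=; by apply/negP.
  have := side a aA; have := side b bA.
  move: hs ht; rewrite /btw; clear; lia.
Qed.


Lemma main_false : False.
Proof.
have ac := A_sub aA; have bc := A_sub bA.
have pbpos : 0 < p b.
  rewrite lt0n; apply: contra vA => /eqP pb0.
  have -> : v = b by apply/eqP; rewrite (p_eq vc bc) pv0 pb0.
  exact: bA.
have pal := p_lt ac.
have pba : p b <= p a by apply: amax.
have [w wc hw] : exists2 w, w \in c & p b < p w < p a.
  case: (ltnP (p b).+1 (p a)) => h.
    have [w wc pw] := p_surj (k := (p b).+1) (ltn_trans h pal).
    by exists w => //; rewrite pw leqnn.
  exfalso.
  have Aab : forall z, z \in A -> (z == a) || (z == b).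
    move=> z zA; have zc := A_sub zA; have := A_pos zA.
    rewrite (p_eq zc ac) (p_eq zc bc); move: h pba; clear; lia.
  case/orP: hB0 => h0.
  - move: (h0) => /existsP [x /existsP [y /and5P [/eqP EB xc yc xy /andP [exy ncyc]]]].
    have xA : x \in A by apply: (A_att B0K); rewrite att_chord // EB !inE eqxx.
    have yA : y \in A by apply: (A_att B0K); rewrite att_chord // EB !inE eqxx orbT.
    have hab : p a != p b.
      rewrite -(p_eq ac bc); apply: contra xy => /eqP Eab.
      by move: (Aab x xA) (Aab y yA); rewrite Eab !orbb => /eqP -> /eqP ->.
    have nb : next c b = a.
      have [nbc [[_ pn]|[hh _]]] := p_next bc.
        by apply/eqP; rewrite (p_eq nbc ac) pn; move: h pba hab; clear; lia.
      by move: h pba hab hh pal; clear; lia.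
    move: xy ncyc; case/orP: (Aab x xA) => /eqP ->; case/orP: (Aab y yA) => /eqP ->;
      rewrite ?eqxx // /cycle_edge nb eqxx ?orbT; by move=> _.
  - have sub : att e c B0 \subset [set a; b].
      by apply/subsetP => z zB; rewrite !inE; apply: Aab; exact: A_att B0K zB.
    have H1 : #|att e c B0| < 3.
      by apply: leq_ltn_trans (subset_leq_card sub) _; rewrite cards2; case: (a != b).
    have H2 : v \notin att e c B0 by apply: contra vA; exact: A_att B0K.
    exact: (@comp_few B0 v h0 H1 vc H2).
pose S0 := [set a; b].
pose Z := [pred x | ((x \in c) && ((p x < p b) || (p a < p x))) ||
   [exists B, [&& is_comp e c B, x \in B &
         [exists s in att e c B, (s \in c) && ((p s < p b) || (p a < p s))]]]].
have toS : forall y, y \in c -> y != a -> y != b -> ~~ (p b < p y < p a) -> Z y.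
  move=> y yc; rewrite (p_eq yc ac) (p_eq yc bc) => ya yb hy.
  apply/orP; left; rewrite yc /=; move: ya yb hy; clear; lia.
apply: (@sep S0 Z _ _ v w).
- by rewrite cards2; case: (a != b).
- move=> x y zx exy yS.
  have /andP [ya yb] : (y != a) && (y != b) by move: yS; rewrite !inE negb_or.
  case/orP: zx => [/andP [xc hx] | /existsP [B /and3P [hB xB /existsP [s' /andP [sB /andP [sc hs]]]]]].
  + case yc: (y \in c).
    * apply: toS => //.
      have ya' : p y != p a by rewrite -(p_eq yc ac).
      have yb' : p y != p b by rewrite -(p_eq yc bc).
      case ce: (cycle_edge c x y).
        move: ce; rewrite /cycle_edge => /orP [] /eqP E.
          have [_ [[_ pn]|[hh pn]]] := p_next xc; rewrite E in pn;
            move: pn hx ya' yb' pbpos pba pal; clear; lia.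
        have [_ [[_ pn]|[hh pn]]] := p_next yc; rewrite E in pn;
          move: pn hx ya' yb' pbpos pba pal; try move: hh; clear; lia.
      have xy : x != y by apply/eqP => E; move: exy; rewrite E e_irr.
      have hch : is_chord e c [set x; y].
        by apply/existsP; exists x; apply/existsP; exists y; rewrite eqxx xc yc xy exy ce.
      apply/negP => hy; apply: (@cross [set x; y] x y) => //.
      - by rewrite /is_bridge hch.
      - by rewrite att_chord // !inE eqxx.
      - by rewrite att_chord // !inE eqxx orbT.
    * have hBy : is_comp e c [set z | connect (off_rel e c) y z].
        by apply/existsP; exists y; rewrite yc eqxx.
      apply/orP; right; apply/existsP; exists [set z | connect (off_rel e c) y z].
      rewrite hBy inE connect0 /=; apply/existsP; exists x; rewrite xc hx andbT.
      by rewrite att_comp // inE xc andbT /=; apply/existsP; exists y; rewrite inE connect0 /= e_sym exy.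
  + have xc : x \notin c by exact: comp_off hB xB.
    case yc: (y \in c).
    * apply: toS => //; apply/negP => hy; apply: (@cross B s' y) => //.
      - by rewrite /is_bridge hB orbT.
      - by rewrite att_comp // inE yc /=; apply/existsP; exists x; rewrite xB exy.
    * apply/orP; right; apply/existsP; exists B; rewrite hB /=; apply/andP; split.
        case/existsP: (hB) => u0 /andP [_ /eqP EB].
        move: xB; rewrite EB !inE => cx; apply: connect_trans cx (connect1 _).
        by rewrite /off_rel /= exy xc yc.
      by apply/existsP; exists s'; rewrite sB sc hs.
- by apply/orP; left; rewrite vc pv0 pbpos.
- rewrite !inE; apply/negP => /orP [] /eqP E; move/negP: vA; apply; by rewrite E.
- rewrite !inE (p_eq wc ac) (p_eq wc bc); move: hw; clear; lia.
- apply/negP => /orP [/andP [_] | /existsP [B /and3P [hB wB _]]].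
    move: hw; clear; lia.
  by move: (comp_off hB wB); rewrite wc.
Qed.

End Main.

Theorem mainTheorem8 (T : finType) (e : rel T)
  (e_sym : symmetric e) (e_irr : irreflexive e)
  (F3 : k_connected e 3)
  (c : seq T) (c_uniq : uniq c) (c_cyc : cycle e c) (c_len : 4 <= size c)
  (K : {set {set T}}) (HK : is_conflict_component e c K) :
  forall v, v \in c -> exists2 X, X \in K & v \in att e c X.
Proof.
move=> v vc.
case: HK => B0 [hB0 EK].
case: (boolP (v \in A e c K)) => [|vA].
  by rewrite inE => /existsP [X /andP [XK vX]]; exists X.
exfalso.
have [z0 z0A] := A_nonempty F3 vc hB0 EK.
case: (arg_minnP (p c v) z0A) => b bA bmin.
case: (arg_maxnP (p c v) z0A) => a aA amax.
exact: (main_false e_sym e_irr F3 c_uniq c_len vc hB0 EK vA aA bA amax bmin).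
Qed.
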